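(* Let $k\ge1$, let $\Gamma\subset\mathbb{R}_+^k$ be a nonempty compact set, and let $(b_n)_{n\ge1}$ be a sequence of functions in $\mathcal{B}_\Gamma$. Then there exists a subsequence $(b_{n'})$ that converges pointwise on $\mathbb{R}^k$ to a limit function $b$, i.e., $\lim_{n'\to\infty}b_{n'}(x)=b(x)$ for every $x\in\mathbb{R}^k$, and this function $b$ belongs to $\mathcal{B}_\Gamma$.
   Context: $\mathcal{B}_\Gamma$ denotes the set of all convex functions $b:\mathbb{R}^k\to\mathbb{R}$ with $b(\mathbf{0})=0$ such that for every $x\in\mathbb{R}^k$ the subdifferential $\partial b(x)=\{g\in\mathbb{R}^k: b(y)-b(x)\ge g\cdot(y-x)\ \forall y\in\mathbb{R}^k\}$ satisfies $\partial b(x)\cap\Gamma\neq\emptyset$. *)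

(* Defs.v *)
From HB Require Import structures.
From mathcomp Require Import all_boot all_order all_algebra.
From mathcomp Require Import all_classical all_reals all_analysis.
Set Implicit Arguments. Unset Strict Implicit. Unset Printing Implicit Defensive.
Import Order.TTheory GRing.Theory Num.Theory.
Import numFieldNormedType.Exports.
Local Open Scope classical_set_scope.
Local Open Scope ring_scope.

Definition dotv (R : realType) (k : nat) (u v : 'rV[R]_k) : R :=
  \sum_(i < k) u ord0 i * v ord0 i.

Definition subdiff (R : realType) (k : nat) (b : 'rV[R]_k -> R) (x : 'rV[R]_k)
  : set 'rV[R]_k :=
  [set g | forall y, dotv g (y - x) <= b y - b x].

Definition convex_fun (R : realType) (k : nat) (b : 'rV[R]_k -> R) : Prop :=
  forall (x y : 'rV[R]_k) (t : R), 0 <= t -> t <= 1 ->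
    b (t *: x + (1 - t) *: y) <= t * b x + (1 - t) * b y.

Definition B_Gamma (R : realType) (k : nat) (Gamma : set 'rV[R]_k)
  : set ('rV[R]_k -> R) :=
  [set b | convex_fun b /\ b 0 = 0 /\
           forall x, subdiff b x `&` Gamma !=set0].

Definition in_orthant (R : realType) (k : nat) (Gamma : set 'rV[R]_k) : Prop :=
  forall g, Gamma g -> forall i, 0 <= g ord0 i.

(* Main.v *)
Require Import Defs.
From HB Require Import structures.
From mathcomp Require Import all_boot all_order all_algebra.
From mathcomp Require Import all_classical all_reals all_analysis.
From mathcomp Require Import lra.
Import Order.TTheory GRing.Theory Num.Theory.
Import numFieldNormedType.Exports.
Local Open Scope classical_set_scope.
Local Open Scope ring_scope.
Set Implicit Arguments. Unset Strict Implicit.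

Lemma entry_le (R : realType) (k : nat) (v : 'rV[R]_k) i : `|v ord0 i| <= `|v|.
Proof.
have /mapP[j Hj ->] : `|v ord0 i| \in [seq `|v x.1 x.2| | x : 'I_1 * 'I_k].
  by apply/mapP; exists (ord0, i) => //=; rewrite mem_enum.
by rewrite [leRHS]/Num.Def.normr /= mx_normrE; apply/bigmax_geP; right => /=; exists j.
Qed.

Lemma dot_bound (R : realType) (k : nat) (g v : 'rV[R]_k) (G : R) :
  (forall i, `|g ord0 i| <= G) -> `|dotv g v| <= G * \sum_i `|v ord0 i|.
Proof.
move=> hg; rewrite /dotv mulr_sumr; apply: le_trans (ler_norm_sum _ _ _) _.
apply: ler_sum => i _; rewrite normrM; apply: ler_wpM2r => //.
Qed.

Lemma dotvBl (R : realType) (k : nat) (g h v : 'rV[R]_k) :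
  dotv g v - dotv h v = dotv (g - h) v.
Proof.
rewrite /dotv -sumrB; apply: eq_bigr => i _; rewrite !mxE mulrBl //.
Qed.

Lemma lip (R : realType) (k : nat) (Gamma : set 'rV[R]_k) (G : R) b :
  (forall g, Gamma g -> forall i, `|g ord0 i| <= G) ->
  B_Gamma Gamma b -> forall x y,
  `|b x - b y| <= G * \sum_i `|x ord0 i - y ord0 i|.
Proof.
move=> hG [_ [_ hsub]] x y.
have e1 : \sum_i `|(x - y) ord0 i| = \sum_i `|x ord0 i - y ord0 i|.
  by apply: eq_bigr => i _; rewrite !mxE.
have e2 : \sum_i `|(y - x) ord0 i| = \sum_i `|x ord0 i - y ord0 i|.
  by apply: eq_bigr => i _; rewrite !mxE distrC.
have [g [gx gG]] := hsub x.
have [h [hy hG']] := hsub y.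
have := dot_bound (y - x) (hG _ gG); rewrite e2 => b1.
have := dot_bound (x - y) (hG _ hG'); rewrite e1 => b2.
have i1 := gx y. have i2 := hy x.
rewrite ler_norml; apply/andP; split.
- apply: le_trans _ i2; rewrite lerNl; apply: le_trans _ b2.
  by rewrite -normrN ler_norm.
- rewrite -opprB lerNl; apply: le_trans _ i1; rewrite lerNl; apply: le_trans _ b1.
  by rewrite -normrN ler_norm.
Qed.

Lemma diag_subseq (R : realType) (u : nat -> nat -> R) (B : nat -> R) :
  (forall n j, `|u n j| <= B j) ->
  exists (phi : nat -> nat) (c : nat -> R),
    (forall n m, (n < m)%N -> (phi n < phi m)%N) /\
    forall j, (fun n => u (phi n) j) @ \oo --> c j.
Proof.
move=> hB.
pose K := [set f : prod_topology (fun _ : nat => Topological.clone R _) | forall j, `[- B j, B j]%classic (f j)].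
have cK : compact K.
  exact (@tychonoff nat (fun _ => Topological.clone R _) (fun j => `[- B j, B j]%classic) (fun j => @segment_compact R (- B j) (B j))).
pose F := (fun n => (u n : prod_topology (fun _ : nat => Topological.clone R _))) @ \oo.
have FK : F K.
  apply: (@filterE nat \oo _) => n j /=; rewrite in_itv /= -ler_norml; exact: hB.
have [c [Kc clc]] := cK F _ FK.
have step : forall p : nat * nat, exists m', (p.1 < m')%N /\
    forall j, (j <= p.2)%N -> `|u m' j - c j| < p.2.+1%:R^-1.
  move=> [m n] /=.
  have nb : nbhs c [set f : prod_topology (fun _ : nat => Topological.clone R _) | forall j : 'I_n.+1, `|f j - c j| < n.+1%:R^-1].
    refine (@filter_forall _ 'I_n.+1 (fun (j : 'I_n.+1) (f : prod_topology (fun _ : nat => Topological.clone R _)) => `|f j - c j| < n.+1%:R^-1) (nbhs c) (nbhs_filter c) _) => j.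
    have e0 : 0 < n.+1%:R^-1 :> R by rewrite invr_gt0 ltr0n.
    have H := @proj_continuous nat (fun _ => Topological.clone R _) j c _ (nbhsx_ballx (c j : R) _ e0).
    refine (@filterS _ (nbhs c) (nbhs_filter c) _ _ _ H) => f Hb.
    have : ball (c j : R) n.+1%:R^-1 (f j : R) := Hb.
    by rewrite -ball_normE /= distrC.
  have FA : F [set f | exists m', (m < m')%N /\ f = u m'].
    by apply: filterS (nbhs_infty_gt m) => n' hn; exists n'.
  have [f [[m' [hm ->]] hf]] := clc _ _ FA nb.
  by exists m'; split => // j hj; exact: (hf (Ordinal (hj : (j < n.+1)%N))).
have [st hst] := choice step.
pose phi := fix phi n := if n is n'.+1 then st (phi n', n) else st (0%N, 0%N).
have hphi : forall n j, (j <= n)%N -> `|u (phi n) j - c j| < n.+1%:R^-1.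
  by case => [|n]; [exact (hst (0,0)%N).2 | exact (hst (phi n, n.+1)).2].
have incr : forall n, (phi n < phi n.+1)%N := fun n => (hst (phi n, n.+1)).1.
exists phi, c; split.
  exact: (homo_ltn (fun y x z => @ltn_trans y x z) incr).
move=> j; apply/cvgrPdist_lt => e e0.
near=> n.
rewrite distrC; apply: lt_le_trans (hphi n j _) _.
  by near: n; exact: nbhs_infty_ge.
rewrite invf_ple ?posrE ?ltr0n //.
apply: le_trans (_ : n%:R <= _); last by rewrite ler_nat.
by near: n; exact: nbhs_infty_ger.
Unshelve. all: by end_near. Qed.

Lemma dense_d (R : realType) (k : nat) (x : 'rV[R]_k) (dl : R) : 0 < dl ->
  exists q : 'rV[rat]_k, forall i, `|x ord0 i - ratr (q ord0 i)| < dl.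
Proof.
move=> dl0.
have hq : forall i : 'I_k, exists r : rat, `|x ord0 i - ratr r| < dl.
  move=> i; have : x ord0 i - dl < x ord0 i + dl by lra.
  move=> /rat_in_itvoo [r hr]; exists r; rewrite ltr_distlC.
  by move: hr; rewrite in_itv.
have [qf hqf] := choice hq.
by exists (\row_i qf i) => i; rewrite mxE.
Qed.

Unset Implicit Arguments. Set Strict Implicit.

Theorem proposition3 (R : realType) (k : nat) (hk : (1 <= k)%N)
  (Gamma : set 'rV[R]_k)
  (hGne : Gamma !=set0) (hGc : compact Gamma) (hGpos : in_orthant Gamma)
  (bs : nat -> ('rV[R]_k -> R))
  (hbs : forall n, B_Gamma Gamma (bs n)) :
  exists (phi : nat -> nat) (b : 'rV[R]_k -> R),
    (forall n m, (n < m)%N -> (phi n < phi m)%N) /\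
    (forall x, (fun n => bs (phi n) x) @ \oo --> b x) /\
    B_Gamma Gamma b.
Proof.
have [M [Mreal hM]] := compact_bounded hGc.
pose G := `|M| + 1.
have G0 : 0 < G by rewrite /G ltr_pwDr.
have hGb : forall g, Gamma g -> forall i, `|g ord0 i| <= G.
  move=> g gG i; apply: le_trans (entry_le g i) _.
  apply: (hM G) => //; rewrite /G (le_lt_trans (ler_norm M)) // ltrDl //.
pose d : nat -> 'rV[R]_k := fun j =>
  if (pickle_inv j : option 'rV[rat]_k) is Some q then map_mx ratr q else 0.
have hd : forall (x : 'rV[R]_k) (dl : R), 0 < dl -> exists j, forall i, `|x ord0 i - d j ord0 i| < dl.
  move=> x dl dl0; have [q hq] := dense_d x dl0.
  exists (pickle q) => i; rewrite /d pickleK_inv mxE; exact: hq.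
have hB : forall n j, `|bs n (d j)| <= G * \sum_i `|d j ord0 i - (0 : 'rV[R]_k) ord0 i|.
  move=> n j; have := lip hGb (hbs n) (d j) 0.
  by rewrite (hbs n).2.1 subr0.
have [phi [c [hphi hc]]] := diag_subseq hB.
have hcvg : forall x, cvg ((fun n => bs (phi n) x) @ \oo).
  move=> x.
  apply/cauchy_cvgP/cauchy_ballP => e e0.
  pose e8 := e / 8.
  have e80 : 0 < e8 by rewrite /e8 divr_gt0.
  have kpos : 0 < k%:R :> R by rewrite ltr0n.
  pose dl := e8 / (G * k%:R).
  have dl0 : 0 < dl by rewrite /dl divr_gt0 // mulr_gt0.
  have [j hj] := hd x dl dl0.
  have hL : forall m, `|bs m x - bs m (d j)| <= e8.
    move=> m; apply: le_trans (lip hGb (hbs m) x (d j)) _.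
    apply: (@le_trans _ _ (G * (k%:R * dl))).
      apply: ler_wpM2l; first exact: ltW.
      apply: (@le_trans _ _ (\sum_(i < k) dl)).
        by apply: ler_sum => i _; exact: ltW.
      by rewrite sumr_const card_ord mulr_natl.
    rewrite mulrA /dl mulrC divfK ?gt_eqF ?mulr_gt0 //.
  have [N _ hN] := (cvgrPdist_lt _ _).1 (hc j) _ e80.
  exists ((fun n => bs (phi n) x) @` [set n | (N <= n)%N],
          (fun n => bs (phi n) x) @` [set n | (N <= n)%N]).
    by split; exists N => // n hn; exists n.
  move=> [y z] /= [[a ha <-] [a' ha' <-]].
  rewrite -ball_normE /=.
  have h1 := hL (phi a). have h2 := hL (phi a').
  have h3 := hN a ha. have h4 := hN a' ha'.
  have t1 := ler_distD (bs (phi a) (d j)) (bs (phi a) x) (bs (phi a') x).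
  have t2 := ler_distD (c j) (bs (phi a) (d j)) (bs (phi a') x).
  have t3 := ler_distD (bs (phi a') (d j)) (c j) (bs (phi a') x).
  rewrite distrC in h3.
  rewrite [X in X <= _ -> _]distrC in h2 *.
  move=> h2; rewrite /e8 in h1 h2 h3 h4 e80; lra.
pose b x := lim ((fun n => bs (phi n) x) @ \oo).
have hcv : forall x, (fun n => bs (phi n) x) @ \oo --> b x by move=> x; exact: hcvg.
exists phi, b; split => //; split => //.
split.
  move=> x y t t0 t1.
  apply: (ler_cvg_to (hcv _) (_ : _ @ \oo --> t * b x + (1 - t) * b y)).
    by apply: cvgD; apply: cvgMr; exact: hcv.
  by apply: nearW => n; exact: (hbs (phi n)).1.
split.
  have h0 := hcv 0.
  rewrite (_ : (fun n => bs (phi n) 0) = fun=> 0) in h0; last first.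
    by apply: funext => n; exact: (hbs _).2.1.
  exact: (cvg_unique _ h0 (cvg_cst _)).
move=> x.
have [gs hgs] := choice (fun n => (hbs (phi n)).2.2 x).
pose Fg := gs @ \oo.
have FG : Fg Gamma by apply: (@filterE nat \oo _) => n; exact: (hgs n).2.
have [gc [Ggc clg]] := hGc Fg _ FG.
exists gc; split => // y.
apply/ler_addgt0Pr => e e0.
pose e3 := e / 3.
have e30 : 0 < e3 by rewrite /e3 divr_gt0.
pose v := y - x.
pose S := \sum_i `|v ord0 i|.
have S0 : 0 <= S by rewrite /S sumr_ge0.
have FA : Fg [set h | exists n, h = gs n /\ `|b y - bs (phi n) y| < e3 /\
                                    `|b x - bs (phi n) x| < e3].
  have hy := (cvgrPdist_lt _ _).1 (hcv y) _ e30.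
  have hx := (cvgrPdist_lt _ _).1 (hcv x) _ e30.
  have : \forall n \near \oo, `|b y - bs (phi n) y| < e3 /\ `|b x - bs (phi n) x| < e3.
    by apply: filterI; [exact: hy | exact: hx].
  by apply: filterS => n [h1 h2]; exists n.
have nbB : nbhs gc [set h | `|dotv h v - dotv gc v| < e3].
  apply/nbhs_ballP; exists (e3 / (S + 1)); first by rewrite /= divr_gt0 // ltr_wpDl.
  move=> h; rewrite -ball_normE /= => hh.
  rewrite dotvBl.
  apply: le_lt_trans (dot_bound v (_ : forall i, `|(h - gc) ord0 i| <= `|gc - h|)) _.
    by move=> i; rewrite distrC; exact: entry_le.
  apply: le_lt_trans (_ : `|gc - h| * S <= `|gc - h| * (S + 1)) _.
    by rewrite ler_wpM2l // lerDl.
  rewrite -(divfK (_ : S + 1 != 0) e3); last by rewrite gt_eqF // ltr_wpDl.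
  by rewrite ltr_pM2r // ltr_wpDl.
have [h [[n [-> [hy hx]]] hB']] := clg _ _ FA nbB.
have hsub := (hgs n).1 y.
move: hy hx hB'; rewrite /= !ltr_norml => /andP[hy1 hy2] /andP[hx1 hx2] /andP[hd1 hd2].
rewrite /v in hd1 hd2.
rewrite /e3 in hy1 hy2 hx1 hx2 hd1 hd2.
lra.
Qed.
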